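(* Let $E$ be a finite-dimensional real Euclidean space with inner product $\langle\cdot,\cdot\rangle$, let $\|\cdot\|_{(1)},\dots,\|\cdot\|_{(n)}$ be norms on $E$, and let $\alpha_1,\dots,\alpha_n\ge 0$, not all zero. For each $i$ let $\mathrm{LMO}_i$ be a linear minimization oracle for the unit ball of $\|\cdot\|_{(i)}$, i.e. $\mathrm{LMO}_i(\mathbf{M})\in\arg\min_{\|\mathbf{D}\|_{(i)}\le 1}\langle\mathbf{M},\mathbf{D}\rangle$ for every $\mathbf{M}\in E$. Let $\|\cdot\|$ be the norm dual to the norm $\sum_{i=1}^n\alpha_i\|\cdot\|_{(i)}^\dagger$. Then for every $\mathbf{M}\in E$, $$\sum_{i=1}^n\alpha_i\,\mathrm{LMO}_i(\mathbf{M})\in\arg\min_{\|\mathbf{D}\|\le 1}\langle\mathbf{M},\mathbf{D}\rangle,$$ i.e. $\sum_{i=1}^n\alpha_i\mathrm{LMO}_i$ is a linear minimization oracle for the unit ball of $\|\cdot\|$.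
   Context: For a norm $\|\cdot\|$ on $E$, its dual norm is $\|\mathbf{M}\|^\dagger=\sup_{\|\mathbf{D}\|\le1}\langle\mathbf{M},\mathbf{D}\rangle$. *)

(* Defs.v *)
From HB Require Import structures.
From mathcomp Require Import all_boot all_order all_algebra.
From mathcomp Require Import classical_sets reals.
Set Implicit Arguments. Unset Strict Implicit. Unset Printing Implicit Defensive.
Import Order.TTheory GRing.Theory Num.Theory.
Local Open Scope ring_scope.
Local Open Scope classical_set_scope.

(* The Euclidean space E is modelled as R^m = 'rV[R]_m with the standard
   inner product (every finite-dimensional real Euclidean space is
   isometrically isomorphic to this). *)
Definition inner (R : realType) (m : nat) (u v : 'rV[R]_m) : R :=
  \sum_(j < m) u 0 j * v 0 j.

Definition is_norm (R : realType) (m : nat) (N : 'rV[R]_m -> R) : Prop :=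
  [/\ forall x, 0 <= N x,
      forall x, N x = 0 -> x = 0,
      forall (a : R) x, N (a *: x) = `|a| * N x
    & forall x y, N (x + y) <= N x + N y].

Definition dual_norm (R : realType) (m : nat) (N : 'rV[R]_m -> R)
  (M : 'rV[R]_m) : R :=
  sup [set inner M D | D in [set D | N D <= 1]].

Definition in_argmin_ball (R : realType) (m : nat) (N : 'rV[R]_m -> R)
  (M X : 'rV[R]_m) : Prop :=
  N X <= 1 /\ forall D, N D <= 1 -> inner M X <= inner M D.

Definition is_LMO (R : realType) (m : nat) (N : 'rV[R]_m -> R)
  (lmo : 'rV[R]_m -> 'rV[R]_m) : Prop :=
  forall M, in_argmin_ball N M (lmo M).

(* Main.v *)
Require Import Defs.
From HB Require Import structures.
From mathcomp Require Import all_boot all_order all_algebra.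
From mathcomp Require Import classical_sets reals.
Import Order.TTheory GRing.Theory Num.Theory.
Local Open Scope ring_scope.
Local Open Scope classical_set_scope.
Set Implicit Arguments.

Section S.
Variables (R : realType) (m : nat).
Implicit Types (u v w : 'rV[R]_m).

Lemma innerC u v : inner u v = inner v u.
Proof. by apply: eq_bigr => j _; rewrite mulrC. Qed.

Lemma innerZr a u v : inner u (a *: v) = a * inner u v.
Proof. rewrite /inner mulr_sumr; apply: eq_bigr => j _; by rewrite mxE mulrCA. Qed.

Lemma innerZl a u v : inner (a *: u) v = a * inner u v.
Proof. by rewrite innerC innerZr innerC. Qed.

Lemma innerNr u v : inner u (- v) = - inner u v.
Proof. by rewrite -scaleN1r innerZr mulN1r. Qed.

Lemma innerNl u v : inner (- u) v = - inner u v.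
Proof. by rewrite innerC innerNr innerC. Qed.

Lemma inner0l v : inner 0 v = 0.
Proof. by rewrite -(scale0r 0) innerZl mul0r. Qed.

Lemma inner_sumr (I : finType) (F : I -> 'rV[R]_m) u :
  inner u (\sum_i F i) = \sum_i inner u (F i).
Proof.
rewrite /inner exchange_big /=; apply: eq_bigr => j _.
by rewrite summxE mulr_sumr.
Qed.

Lemma sup_max (E : set R) a : E a -> ubound E a -> sup E = a.
Proof.
move=> Ea ub; apply/le_anti/andP; split; first by apply: ge_sup => //; exists a.
by apply: ub_le_sup => //; exists a.
Qed.

Variables (N : 'rV[R]_m -> R) (L : 'rV[R]_m -> 'rV[R]_m).
Hypothesis nN : is_norm N.
Hypothesis hL : is_LMO N L.

Lemma NN v : N (- v) = N v.
Proof. case: nN => _ _ h _; by rewrite -scaleN1r h normrN normr1 mul1r. Qed.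

Lemma F1 M E : N E <= 1 -> inner M E <= - inner M (L M).
Proof.
move=> hE; case: (hL M) => _ h.
have := h (- E); rewrite NN innerNr => /(_ hE); by rewrite lerNr.
Qed.

Lemma F2 M : dual_norm N M = - inner M (L M).
Proof.
apply: sup_max.
  exists (- L M); last by rewrite innerNr.
  by rewrite /= NN; case: (hL M).
by move=> _ [E hE <-]; apply: F1.
Qed.

Lemma F3 M E : N E <= 1 -> inner E M <= dual_norm N M.
Proof. by move=> hE; rewrite F2 innerC; apply: F1. Qed.

Lemma F5 M : 0 <= dual_norm N M.
Proof.
rewrite -(inner0l M); apply: F3.
case: nN => h0 _ h _; by rewrite -(scale0r 0) h normr0 mul0r.
Qed.

Lemma F4 a M : dual_norm N (a *: M) = `|a| * dual_norm N M.
Proof.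
rewrite [in RHS]F2; apply: sup_max.
  have [a0|a0] := leP 0 a.
    exists (- L M); first by rewrite /= NN; case: (hL M).
    by rewrite innerNr innerZl ger0_norm // mulrN.
  exists (L M); first by case: (hL M).
  by rewrite innerZl ltr0_norm // mulrNN.
move=> _ [E hE <-]; rewrite innerZl.
have [a0|a0] := leP 0 a.
  by rewrite ger0_norm //; apply: ler_wpM2l => //; apply: F1.
rewrite ltr0_norm // -(mulrNN a) -innerNr; apply: ler_wpM2l.
  by rewrite oppr_ge0 ltW.
by rewrite innerNr lerN2; case: (hL M) => _; apply.
Qed.

Lemma F6 D E : inner D E <= N D * dual_norm N E.
Proof.
case: (nN) => h0 hz hZ _.
have [/hz ->|nD] := eqVneq (N D) 0; first by rewrite inner0l mulr_ge0 // F5.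
have pD : 0 < N D by rewrite lt_def nD h0.
have eD : D = N D *: ((N D)^-1 *: D) by rewrite scalerA divff // scale1r.
rewrite {1}eD innerZl; apply: ler_wpM2l; first exact: ltW.
apply: F3; rewrite hZ ger0_norm ?invr_ge0 ?h0 // mulVf //.
Qed.
End S.

Theorem lemma4 (R : realType) (m n : nat)
  (N : 'I_n -> 'rV[R]_m -> R) (alpha : 'I_n -> R)
  (lmo : 'I_n -> 'rV[R]_m -> 'rV[R]_m) :
  (forall i, is_norm (N i)) ->
  (forall i, 0 <= alpha i) ->
  (exists i, alpha i != 0) ->
  (forall i, is_LMO (N i) (lmo i)) ->
  let Nsum := fun M : 'rV[R]_m => \sum_(i < n) alpha i * dual_norm (N i) M in
  let Nstar := dual_norm Nsum in
  forall M : 'rV[R]_m,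
    in_argmin_ball Nstar M (\sum_(i < n) alpha i *: lmo i M).
Proof.
move=> hN ha [k hk] hL Nsum Nstar M.
have ak : 0 < alpha k by rewrite lt_def hk ha.
have Nsum0 : Nsum 0 = 0.
  rewrite /Nsum big1 // => i _; rewrite (F2 (hN i) (hL i)) inner0l oppr0 mulr0 //.
have NsumZ a v : Nsum (a *: v) = `|a| * Nsum v.
  rewrite /Nsum mulr_sumr; apply: eq_bigr => i _.
  by rewrite (F4 (hN i) (hL i)) mulrCA.
have Nsum_ge i v : alpha i * dual_norm (N i) v <= Nsum v.
  rewrite /Nsum (bigD1 i) //= lerDl; apply: sumr_ge0 => j _.
  by apply: mulr_ge0; [exact: ha | exact: (F5 (hN j) (hL j))].
have Nsum_ge0 v : 0 <= Nsum v.
  apply: sumr_ge0 => j _.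
  by apply: mulr_ge0; [exact: ha | exact: (F5 (hN j) (hL j))].
have innerX : inner M (\sum_(i < n) alpha i *: lmo i M) = - Nsum M.
  rewrite inner_sumr /Nsum -sumrN; apply: eq_bigr => i _.
  by rewrite innerZr (F2 (hN i) (hL i)) mulrN opprK.
split.
  apply: ge_sup.
    exists 0; exists 0; first by rewrite /= Nsum0 ler01.
    by rewrite innerC inner0l.
  move=> _ [D hD <-]; rewrite innerC inner_sumr; apply: le_trans hD.
  apply: ler_sum => i _; rewrite innerZr; apply: ler_wpM2l; first exact: ha.
  by rewrite innerC; apply: (F3 (hN i) (hL i)); case: (hL i M).
move=> D hD.
have key : inner (- D) M <= Nsum M.
  have [z|pos] := eqVneq (Nsum M) 0.
    have dk : dual_norm (N k) M <= 0.
      by rewrite -(pmulr_rle0 _ ak) -z; apply: Nsum_ge.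
    apply: le_trans (F6 (hN k) (hL k) (- D) M) _; rewrite z.
    by apply: mulr_ge0_le0; [case: (hN k) | exact: dk].
  have cpos : 0 < Nsum M by rewrite lt_def pos Nsum_ge0.
  set E := (- (Nsum M)^-1) *: M.
  have hE : Nsum E <= 1.
    by rewrite /E NsumZ normrN gtr0_norm ?invr_gt0 // mulVf.
  have hub : has_ubound [set inner D E0 | E0 in [set E0 | Nsum E0 <= 1]].
    exists (N k D / alpha k) => _ [E' hE' <-].
    apply: le_trans (F6 (hN k) (hL k) D E') _.
    apply: ler_wpM2l; first by case: (hN k).
    rewrite -(ler_pM2l ak) mulfV //; exact: le_trans (Nsum_ge k E') hE'.
  have h1 : inner D E <= 1.
    apply: le_trans hD; apply: (ub_le_sup hub); by exists E.
  move: h1; rewrite /E innerZr mulNr -mulrN -innerNl.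
  by rewrite -(ler_pM2l cpos) mulrA mulfV // mul1r mulr1.
rewrite innerX lerNl innerC -innerNl; exact: key.
Qed.
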